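(* Let $\Omega=\{1,\ldots,n\}$, let $\mathbf{p}=(p_1,\ldots,p_n)$ and $\mathbf{q}=(q_1,\ldots,q_n)$ be probability vectors, and let $1\le s\le n$; set $\Omega_1=\{1,\ldots,s\}$ and $\Omega_2=\{s+1,\ldots,n\}$. For weights $w=(w_{i,j})_{i\ne j}$ with $0\le w_{i,j}\le1$ and $w_{i,j}+w_{j,i}=1$, define $p_I^w(k)=p_k^2+\sum_{i\ne k}2p_ip_kw_{k,i}$ and $A(w)=\sum_{k=1}^n\min(q_k,p_I^w(k))$; let $P^\star(\mathrm{acc})=\max_w A(w)$. Call $w$ truncated if $w_{i,j}=1$ whenever $i\in\Omega_1,j\in\Omega_2$, and $w_{i,j}=1$ whenever $i,j\in\Omega_2$ with $i<j$ (the weights $w_{i,j}$ with $i,j\in\Omega_1$ being free). Let $\tilde w$ be a truncated weight family maximizing $\sum_{k=1}^s\min(q_k,p_I^{w}(k))$ over truncated $w$, and let $\tilde P(\mathrm{acc})=A(\tilde w)$. Then $$\tilde P(\mathrm{acc})\ \ge\ P^\star(\mathrm{acc})-\sum_{x\in\Omega_2}\big(q_x-p_x^2\big)^+ .$$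
   Context: Interpretation: with two draft tokens $X_1,X_2$ drawn i.i.d. from $\mathbf{p}$, $w_{i,j}$ is the probability of selecting token $i$ when the unordered input pair is $\{i,j\}$, $p_I^w$ is the distribution of the selected token, and $A(w)$ is the acceptance probability after applying single-draft speculative sampling against $\mathbf{q}$; by the optimal-transport characterization, $\max_w A(w)$ is the optimal acceptance probability. In the paper the tokens are additionally ordered so that $q_1-p_1^2\ge\cdots\ge q_n-p_n^2$. $(a)^+=\max(a,0)$. *)

(* Defs.v *)
(* Tokens Omega = {1..n} are represented 0-indexed by 'I_n. *)
From mathcomp Require Import all_boot all_order all_algebra.
Set Implicit Arguments. Unset Strict Implicit. Unset Printing Implicit Defensive.
Import Order.TTheory GRing.Theory Num.Theory.
Local Open Scope ring_scope.

Section Defs.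
Variables (R : realFieldType) (n : nat).

Definition prob_vec (p : 'I_n -> R) : Prop :=
  (forall i, 0 <= p i) /\ \sum_(i < n) p i = 1.

(* weights w_{i,j} for i <> j (diagonal entries are irrelevant) *)
Definition valid_weight (w : 'I_n -> 'I_n -> R) : Prop :=
  forall i j : 'I_n, i != j -> 0 <= w i j <= 1 /\ w i j + w j i = 1.

Definition pI (p : 'I_n -> R) (w : 'I_n -> 'I_n -> R) (k : 'I_n) : R :=
  p k ^+ 2 + \sum_(i < n | i != k) 2 * p i * p k * w k i.

Definition accA (p q : 'I_n -> R) (w : 'I_n -> 'I_n -> R) : R :=
  \sum_(k < n) Num.min (q k) (pI p w k).

Definition accA1 (s : nat) (p q : 'I_n -> R) (w : 'I_n -> 'I_n -> R) : R :=
  \sum_(k < n | (k < s)%N) Num.min (q k) (pI p w k).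

(* Omega_1 = {i | i < s}, Omega_2 = {i | s <= i} (0-indexed) *)
Definition truncated (s : nat) (w : 'I_n -> 'I_n -> R) : Prop :=
  (forall i j : 'I_n, (i < s)%N -> (s <= j)%N -> w i j = 1) /\
  (forall i j : 'I_n, (s <= i)%N -> (s <= j)%N -> (i < j)%N -> w i j = 1).

Definition is_max_acc (p q : 'I_n -> R) (Pstar : R) : Prop :=
  (exists w, valid_weight w /\ accA p q w = Pstar) /\
  (forall w, valid_weight w -> accA p q w <= Pstar).

End Defs.

(* Main.v *)
Require Import Defs.
From mathcomp Require Import all_boot all_order all_algebra.
From mathcomp Require Import lra.
Import Order.TTheory GRing.Theory Num.Theory.
Local Open Scope ring_scope.

Lemma accA_split (R : realFieldType) (n s : nat) (p q : 'I_n -> R) w :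
  accA p q w = accA1 s p q w +
    \sum_(k < n | (s <= k)%N) Num.min (q k) (pI p w k).
Proof.
rewrite /accA /accA1 (bigID (fun k : 'I_n => (k < s)%N)) /=; congr (_ + _).
by apply: eq_bigl => k; rewrite -leqNgt.
Qed.

Lemma pI_ge (R : realFieldType) (n : nat) (p : 'I_n -> R) w k :
  (forall i, 0 <= p i) -> valid_weight w -> p k ^+ 2 <= pI p w k.
Proof.
move=> p0 wv; rewrite /pI lerDl; apply: sumr_ge0 => i ik.
have ki : k != i by rewrite eq_sym.
have [/andP[h _] _] := wv k i ki.
by rewrite !mulr_ge0.
Qed.

Theorem mainTheorem5 (R : realFieldType) (n s : nat)
  (p q : 'I_n -> R) (Pstar : R) (wt : 'I_n -> 'I_n -> R) :
  prob_vec p -> prob_vec q ->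
  (1 <= s)%N -> (s <= n)%N ->
  is_max_acc p q Pstar ->
  valid_weight wt -> truncated s wt ->
  (forall w, valid_weight w -> truncated s w -> accA1 s p q w <= accA1 s p q wt) ->
  accA p q wt >= Pstar - \sum_(x < n | (s <= x)%N) Num.max (q x - p x ^+ 2) 0.
Proof.
move=> [p0 _] _ _ _ [[ws [wsv <-]] _] wtv wtt wtmax.
pose w' := fun i j : 'I_n =>
  if (i < s)%N && (j < s)%N then ws i j
  else if (i < s)%N then 1 else if (j < s)%N then 0
  else if (i < j)%N then 1 else (0 : R).
have w'v : valid_weight w'.
  move=> i j ij; rewrite /w'.
  case: (ltnP i s) => his; case: (ltnP j s) => hjs /=.
  - exact: wsv.
  - by rewrite lexx ler01 ?addr0 ?add0r.
  - by rewrite lexx ler01 ?addr0 ?add0r.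
  case: (ltngtP i j) => h.
  - by rewrite lexx ler01 ?addr0 ?add0r.
  - by rewrite lexx ler01 ?addr0 ?add0r.
  - by move: ij; rewrite (val_inj h) eqxx.
have w't : truncated s w'.
  split=> i j.
  - by move=> hi hj; rewrite /w' hi [(j < s)%N]ltnNge hj.
  - by move=> hi hj hij; rewrite /w' [(i < s)%N]ltnNge [(j < s)%N]ltnNge hi hj /= hij.
have h1 : accA1 s p q ws <= accA1 s p q w'.
  apply: ler_sum => k ks.
  have : pI p ws k <= pI p w' k.
    rewrite /pI lerD2l; apply: ler_sum => i ik.
    apply: ler_wpM2l; first by rewrite !mulr_ge0.
    rewrite /w' ks /=; case: (ltnP i s) => //= _.
    have ki : k != i by rewrite eq_sym.
    by have [/andP[_ ->] _] := wsv k i ki.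
  move=> h; rewrite le_min !ge_min lexx /= h orbT.
  by case: (leP (q k) (pI p ws k)) => //=; rewrite lexx.
have h2 := wtmax _ w'v w't.
have h3 : \sum_(k < n | (s <= k)%N) Num.min (q k) (pI p ws k)
          <= \sum_(k < n | (s <= k)%N) q k.
  by apply: ler_sum => k _; rewrite ge_min lexx.
have h4 : \sum_(k < n | (s <= k)%N) (q k - Num.max (q k - p k ^+ 2) 0)
          <= \sum_(k < n | (s <= k)%N) Num.min (q k) (pI p wt k).
  apply: ler_sum => k _.
  have hp := @pI_ge _ _ p wt k p0 wtv.
  have m1 : 0 <= Num.max (q k - p k ^+ 2) 0 by rewrite le_max lexx orbT.
  have m2 : q k - p k ^+ 2 <= Num.max (q k - p k ^+ 2) 0 by rewrite le_max lexx.
  rewrite le_min; apply/andP; split; lra.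
rewrite sumrB in h4.
rewrite (@accA_split _ _ s p q ws) (@accA_split _ _ s p q wt).
lra.
Qed.
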